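(* Let $Q\in\mathbb R^{n\times n}$ be symmetric positive semidefinite, $b_0,\ldots,b_p\in\mathbb R^n$, $d_0,\ldots,d_p\in\mathbb R$, $-\infty\le l_i\le u_i\le+\infty$, $f_i(x)=x^TQx+2b_i^Tx+d_i$, and consider \[ ({\rm UQ})\quad \max_{x}\ f_0(x)\quad\text{s.t.}\quad l_i\le f_i(x)\le u_i,\ i=1,\ldots,p, \] \[ ({\rm SOCP})\quad \max_{x,t}\ t+2b_0^Tx+d_0\quad\text{s.t.}\quad l_i\le t+2b_i^Tx+d_i\le u_i,\ i=1,\ldots,p,\quad \left\|\begin{pmatrix}Q^{1/2}x\\ \frac{t-1}{2}\end{pmatrix}\right\|\le\frac{t+1}{2}. \] Suppose ${\rm rank}[b_1,\ldots,b_p]\le{\rm rank}(Q)-1$. Then (UQ) is equivalent to (SOCP) in the sense that $x^*$ globally solves (UQ) if and only if $(x^*,t^* ):=(x^*,x^{*T}Qx^* )$ globally solves (SOCP).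
   Context: $Q^{1/2}$ is the positive semidefinite square root of $Q$; $\|\cdot\|$ is the Euclidean norm. *)

(* Defs.v *)
From HB Require Import structures.
From mathcomp Require Import all_boot all_order all_algebra.
From mathcomp Require Import reals constructive_ereal.
Set Implicit Arguments. Unset Strict Implicit. Unset Printing Implicit Defensive.
Import Order.TTheory GRing.Theory Num.Theory.
Local Open Scope ring_scope.

Section Defs.
Variable R : realType.

Definition qform (n : nat) (Q : 'M[R]_n) (x : 'cV[R]_n) : R := (x^T *m Q *m x) 0 0.

Definition inner (n : nat) (b x : 'cV[R]_n) : R := (b^T *m x) 0 0.

Definition psd (n : nat) (Q : 'M[R]_n) : Prop :=
  Q^T = Q /\ forall x : 'cV[R]_n, 0 <= qform Q x.

(* S is the positive semidefinite square root Q^{1/2} of Q (unique when Q is psd) *)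
Definition is_psd_sqrt (n : nat) (Q S : 'M[R]_n) : Prop := psd S /\ S *m S = Q.

Definition enorm (m : nat) (v : 'cV[R]_m) : R := Num.sqrt (\sum_i v i 0 ^+ 2).

Definition fq (n : nat) (Q : 'M[R]_n) (b : 'cV[R]_n) (d : R) (x : 'cV[R]_n) : R :=
  qform Q x + 2 * inner b x + d.

Definition flin (n : nat) (b : 'cV[R]_n) (d : R) (x : 'cV[R]_n) (t : R) : R :=
  t + 2 * inner b x + d.

(* feasibility in (UQ); the b_i are the columns of B *)
Definition UQ_feasible (n p : nat) (Q : 'M[R]_n) (B : 'M[R]_(n, p)) (d : 'I_p -> R)
    (l u : 'I_p -> \bar R) (x : 'cV[R]_n) : Prop :=
  forall i : 'I_p, (l i <= (fq Q (col i B) (d i) x)%:E)%E /\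
                   ((fq Q (col i B) (d i) x)%:E <= u i)%E.

Definition UQ_global_sol (n p : nat) (Q : 'M[R]_n) (b0 : 'cV[R]_n) (d0 : R)
    (B : 'M[R]_(n, p)) (d : 'I_p -> R) (l u : 'I_p -> \bar R) (xs : 'cV[R]_n) : Prop :=
  UQ_feasible Q B d l u xs /\
  forall x, UQ_feasible Q B d l u x -> fq Q b0 d0 x <= fq Q b0 d0 xs.

(* feasibility in (SOCP); S plays the role of Q^{1/2} *)
Definition SOCP_feasible (n p : nat) (S : 'M[R]_n) (B : 'M[R]_(n, p)) (d : 'I_p -> R)
    (l u : 'I_p -> \bar R) (x : 'cV[R]_n) (t : R) : Prop :=
  (forall i : 'I_p, (l i <= (flin (col i B) (d i) x t)%:E)%E /\
                    ((flin (col i B) (d i) x t)%:E <= u i)%E) /\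
  enorm (col_mx (S *m x) (((t - 1) / 2)%:M : 'cV[R]_1)) <= (t + 1) / 2.

Definition SOCP_global_sol (n p : nat) (S : 'M[R]_n) (b0 : 'cV[R]_n) (d0 : R)
    (B : 'M[R]_(n, p)) (d : 'I_p -> R) (l u : 'I_p -> \bar R)
    (xs : 'cV[R]_n) (ts : R) : Prop :=
  SOCP_feasible S B d l u xs ts /\
  forall x t, SOCP_feasible S B d l u x t -> flin b0 d0 x t <= flin b0 d0 xs ts.

End Defs.

(* Main.v *)
Require Import Defs.
From HB Require Import structures.
From mathcomp Require Import all_boot all_order all_algebra.
From mathcomp Require Import reals constructive_ereal.
From mathcomp Require Import ring lra zify.
Import Order.TTheory GRing.Theory Num.Theory.
Set Implicit Arguments. Unset Strict Implicit.
Local Open Scope ring_scope.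

Section H.
Variable R : realType.
Variable n : nat.
Implicit Types (Q S : 'M[R]_n) (x v : 'cV[R]_n).

Lemma qform_S Q S x : is_psd_sqrt Q S ->
  qform Q x = \sum_k ((S *m x) k 0) ^+ 2.
Proof.
move=> [[ST _] SS]; rewrite /qform -SS.
have -> : x^T *m (S *m S) *m x = (S *m x)^T *m (S *m x).
  by rewrite trmx_mul ST !mulmxA.
by rewrite mxE; apply: eq_bigr => k _; rewrite mxE expr2.
Qed.

Lemma enorm_le Q S x t : is_psd_sqrt Q S ->
  (enorm (col_mx (S *m x) (((t - 1) / 2)%:M : 'cV[R]_1)) <= (t + 1) / 2)
  <-> qform Q x <= t.
Proof.
move=> hS.
have -> : enorm (col_mx (S *m x) (((t - 1) / 2)%:M : 'cV[R]_1))
   = Num.sqrt (qform Q x + ((t - 1) / 2) ^+ 2).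
  rewrite /enorm big_split_ord /= (qform_S x hS); congr (Num.sqrt (_ + _)).
    by apply: eq_bigr => k _; rewrite col_mxEu.
  by rewrite big_ord1 col_mxEd mxE eqxx mulr1n.
have q0 : 0 <= qform Q x by rewrite (qform_S x hS) sumr_ge0 // => k _; rewrite sqr_ge0.
split=> h.
  have y0 : 0 <= (t + 1) / 2 by apply: le_trans h; apply: sqrtr_ge0.
  have := h; rewrite -(ger0_norm y0) -sqrtr_sqr ler_sqrt; last by rewrite sqr_ge0.
  move=> h2; nra.
have y0 : 0 <= (t + 1) / 2 by lra.
rewrite -(ger0_norm y0) -sqrtr_sqr ler_sqrt; last by rewrite sqr_ge0.
nra.
Qed.

Lemma qform0 Q S x : is_psd_sqrt Q S -> qform Q x = 0 -> Q *m x = 0.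
Proof.
move=> hS; rewrite (qform_S x hS) => h0.
have Sx0 : S *m x = 0.
  apply/matrixP => i j; rewrite ord1 [RHS]mxE.
  by apply/eqP; rewrite -sqrf_eq0; apply/eqP; apply: (psumr_eq0P _ h0) => // k _; rewrite sqr_ge0.
by case: hS => _ <-; rewrite -mulmxA Sx0 mulmx0.
Qed.

Lemma eD (A B : 'M[R]_1) : (A + B) 0 0 = A 0 0 + B 0 0. Proof. by rewrite mxE. Qed.
Lemma eZ a (A : 'M[R]_1) : (a *: A) 0 0 = a * A 0 0. Proof. by rewrite mxE. Qed.
Lemma eT (A : 'M[R]_1) : A^T 0 0 = A 0 0. Proof. by rewrite mxE. Qed.

Lemma qform_expand Q x v s : Q^T = Q ->
  qform Q (x + s *: v) = qform Q x + 2 * s * (x^T *m Q *m v) 0 0 + s ^+ 2 * qform Q v.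
Proof.
move=> QT; rewrite /qform.
have cr : v^T *m Q *m x = (x^T *m Q *m v)^T by rewrite !trmx_mul trmxK QT mulmxA.
have ht : (x + s *: v)^T = x^T + s *: v^T by rewrite raddfD /= linearZ.
rewrite ht !mulmxDl !mulmxDr -!scalemxAl -!scalemxAr cr.
rewrite !eD !eZ eT; ring.
Qed.

Lemma inner_lin b x v s : inner b (x + s *: v) = inner b x + s * inner b v.
Proof. by rewrite /inner mulmxDr -scalemxAr eD eZ. Qed.

Lemma exists_v p Q S (B : 'M[R]_(n, p)) : psd Q -> is_psd_sqrt Q S ->
  ((\rank B).+1 <= \rank Q)%N -> exists v, v^T *m B = 0 /\ 0 < qform Q v.
Proof.
move=> [QT Qp] hS hr.
set K := kermx B.
case: (boolP [exists i, 0 < qform Q (row i K)^T]).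
  move/existsP=> [i hi]; exists (row i K)^T; split=> //.
  by rewrite trmxK -row_mul mulmx_ker row0.
rewrite negb_exists => /forallP hall.
have KQ : K *m Q = 0.
  apply/row_matrixP => i; rewrite row_mul row0.
  have hq : qform Q (row i K)^T = 0.
    by apply/eqP; rewrite eq_le Qp andbT leNgt hall.
  have := qform0 hS hq => h.
  by rewrite -[row i K]trmxK -QT -trmx_mul h trmx0.
have : (K <= kermx Q)%MS by apply/sub_kermxP.
move/mxrankS; rewrite !mxrank_ker.
have := rank_leq_row Q; have := rank_leq_row B.
by rewrite /K; lia.
Qed.

End H.

Lemma inner_col0 (R : realType) n p (B : 'M[R]_(n, p)) (v : 'cV[R]_n) i :
  v^T *m B = 0 -> inner (col i B) v = 0.
Proof.
move=> hv; have := congr1 (fun M : 'M[R]_(1, p) => M 0 i) hv; rewrite /= !mxE /inner => h.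
rewrite mxE -[RHS]h; apply: eq_bigr => k _; by rewrite !mxE mulrC.
Qed.

Theorem corollary4 (R : realType) (n p : nat) (Q S : 'M[R]_n)
    (b0 : 'cV[R]_n) (d0 : R) (B : 'M[R]_(n, p)) (d : 'I_p -> R)
    (l u : 'I_p -> \bar R) :
  psd Q ->
  is_psd_sqrt Q S ->
  (forall i, (l i <= u i)%E) ->
  ((\rank B).+1 <= \rank Q)%N ->
  forall xs : 'cV[R]_n,
    UQ_global_sol Q b0 d0 B d l u xs <->
    SOCP_global_sol S b0 d0 B d l u xs (qform Q xs).
Proof.
move=> hQ hS hlu hr xs; have [QT Qp] := hQ.
split.
- move=> [Hf Hopt]; split.
    by split; [exact: Hf | apply/(enorm_le _ _ hS)].
  move=> x t [Hc /(enorm_le _ _ hS) Hn].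
  have [v [hv a0]] := exists_v hQ hS hr.
  set a := qform Q v; have a0' : 0 < a by []; clear a0; rename a0' into a0.
  set bb : R := (x^T *m Q *m v) 0 0; set c := qform Q x - t.
  set ib := inner b0 v.
  have disc : 0 <= bb ^+ 2 - a * c.
    have h1 : 0 <= a * (t - qform Q x).
      apply: mulr_ge0; lra.
    have h2 := sqr_ge0 bb.
    have -> : bb ^+ 2 - a * c = bb ^+ 2 + a * (t - qform Q x) by rewrite /c; ring.
    lra.
  set D := Num.sqrt (bb ^+ 2 - a * c).
  have D0 : 0 <= D by apply: sqrtr_ge0.
  have D2 : D ^+ 2 = bb ^+ 2 - a * c by rewrite sqr_sqrtr.
  have Dn : `|bb| <= D.
    rewrite -sqrtr_sqr /D ler_sqrt //.
    have h1 : 0 <= a * (t - qform Q x) by apply: mulr_ge0; lra.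
    have -> : bb ^+ 2 - a * c = bb ^+ 2 + a * (t - qform Q x) by rewrite /c; ring.
    lra.
  have Dbb : bb <= D /\ - bb <= D.
    by split; apply: le_trans Dn; rewrite ?ler_norm // -normrN ler_norm.
  set e := if 0 <= ib then D else - D.
  have e2 : e ^+ 2 = bb ^+ 2 - a * c by rewrite /e; case: ifP => _; rewrite ?sqrrN D2.
  set s := (- bb + e) / a.
  have as_ : a * s = - bb + e by rewrite /s mulrC divfK // gt_eqF.
  have sib : 0 <= s * ib.
    have : 0 <= (a * s) * ib.
      rewrite as_ /e; case: ifP => h; first by apply: mulr_ge0 => //; lra.
      by apply: mulr_le0; [lra | move/negbT: h; rewrite -ltNge => h; lra].
    rewrite -mulrA; move=> h; rewrite -(pmulr_rge0 _ a0) //.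
  have qy : qform Q (x + s *: v) = t.
    rewrite qform_expand // -/a -/bb.
    have : a * (qform Q x + 2 * s * bb + s ^+ 2 * a - t) = 0.
      have -> : a * (qform Q x + 2 * s * bb + s ^+ 2 * a - t)
                = (a * s) ^+ 2 + 2 * bb * (a * s) + a * c by rewrite /c; ring.
      rewrite as_; nra.
    move/eqP; rewrite mulf_eq0 gt_eqF //= subr_eq0 => /eqP //.
  have Hy : UQ_feasible Q B d l u (x + s *: v).
    move=> i; have := Hc i.
    suff -> : fq Q (col i B) (d i) (x + s *: v) = flin (col i B) (d i) x t by [].
    by rewrite /fq /flin qy inner_lin (inner_col0 i hv) mulr0 addr0.
  have := Hopt _ Hy; rewrite /fq /flin qy inner_lin -/ib => h.
  apply: le_trans h; lra.
- move=> [[Hc Hn] Hopt]; split; first exact: Hc.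
  move=> x Hx; apply: (Hopt x (qform Q x)); split; first exact: Hx.
  by apply/(enorm_le _ _ hS).
Qed.
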